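(* Let $(x_n,y_n)_{n\in\mathbb Z}$ and $(x'_n,y'_n)_{n\in\mathbb Z}$ be two elliptic sequences on the same biquadratic polynomial $F$, in general position. For integers $m\ge1$, $r,s$, let $$P_{m,r,s}(x)=\frac{(x-x_r)(x-x_{r+1})\cdots(x-x_{r+m-1})}{(x-x'_s)(x-x'_{s+1})\cdots(x-x'_{s+m-1})}.$$ Then there are a constant $C_{m,r,s}$ and a polynomial $D_{m,r,s}$ of degree at most $2$ such that, as rational functions of $y$, $$\mathcal D P_{m,r,s}(y)=C_{m,r,s}\,Y_2(y)\,\frac{(y-y_r)\cdots(y-y_{r+m-2})}{(y-y'_{s-1})(y-y'_s)\cdots(y-y'_{s+m-1})},\qquad \mathcal M P_{m,r,s}(y)=D_{m,r,s}(y)\,\frac{(y-y_r)\cdots(y-y_{r+m-2})}{(y-y'_{s-1})\cdots(y-y'_{s+m-1})}.$$ Moreover $C_{1,r,s}=\dfrac{x_r-x'_s}{X_2(x'_s)}$, $D_{1,r,s}(y)=\dfrac{Y_0(y)+(x_r+x'_s)Y_1(y)/2+x_rx'_sY_2(y)}{X_2(x'_s)}$, and for every $m\ge1$: $$D_{m,r,s}(y_{r-1})=-\tfrac12C_{m,r,s}Y_2(y_{r-1})(x_r-x_{r-1}),\quad D_{m,r,s}(y_{r+m-1})=\tfrac12C_{m,r,s}Y_2(y_{r+m-1})(x_{r+m}-x_{r+m-1}),$$ $$D_{m,r,s}(y'_{s-1})=\tfrac12C_{m,r,s}Y_2(y'_{s-1})(x'_s-x'_{s-1}),\quad D_{m,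r,s}(y'_{s+m-1})=-\tfrac12C_{m,r,s}Y_2(y'_{s+m-1})(x'_{s+m}-x'_{s+m-1}).$$
   Context: $F(x,y)=\sum_{i,j=0}^2c_{i,j}x^iy^j=Y_0(y)+xY_1(y)+x^2Y_2(y)=X_0(x)+yX_1(x)+y^2X_2(x)$. An elliptic sequence on $F$ is a doubly infinite sequence $(x_n,y_n)_{n\in\mathbb Z}$ such that for every $n$, $x_n,x_{n+1}$ are the two roots of $x\mapsto F(x,y_n)$ and $y_{n-1},y_n$ are the two roots of $y\mapsto F(x_n,y)$. ''General position'' means all the $x_n,x'_n$ are pairwise distinct, all the $y_n,y'_n$ are pairwise distinct, and $X_2,Y_2$ do not vanish at these points. For a rational function $f$ and a value $y$, let $x^+,x^-$ be the two roots of $F(x,y)=0$ and define $(\mathcal Df)(y)=\frac{f(x^+)-f(x^-)}{x^+-x^-}$ and $(\mathcal Mf)(y)=\frac{f(x^+)+f(x^-)}2$; these are symmetric in $x^\pm$ and define rational functions of $y$; on the lattice, $(\mathcal Df)(y_n)=\frac{f(x_{n+1})-f(x_n)}{x_{n+1}-x_n}$, $(\mathcal Mf)(y_n)=\frac{f(x_n)+f(x_{n+1})}2$. Empty products equal $1$. *)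

(* Defs.v *)
From HB Require Import structures.
From mathcomp Require Import all_boot all_order all_algebra.
Set Implicit Arguments. Unset Strict Implicit. Unset Printing Implicit Defensive.
Import Order.TTheory GRing.Theory Num.Theory.
Local Open Scope ring_scope.

Section Biquad.
Variable K : numClosedFieldType.
Variable c : nat -> nat -> K.

Definition Fb (x y : K) : K := \sum_(i < 3) \sum_(j < 3) c i j * x ^+ i * y ^+ j.
(* Y_k(y) : coefficient of x^k ;  X_k(x) : coefficient of y^k *)
Definition Yc (k : nat) (y : K) : K := \sum_(j < 3) c k j * y ^+ j.
Definition Xc (k : nat) (x : K) : K := \sum_(i < 3) c i k * x ^+ i.

(* elliptic sequence: x_n, x_{n+1} are the two roots of x |-> F(x,y_n),
   y_{n-1}, y_n are the two roots of y |-> F(x_n,y) (Vieta form) *)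
Definition elliptic_seq (xs ys : int -> K) : Prop :=
  forall n : int,
    (forall x, Fb x (ys n) = Yc 2 (ys n) * (x - xs n) * (x - xs (n + 1))) /\
    (forall y, Fb (xs n) y = Xc 2 (xs n) * (y - ys (n - 1)) * (y - ys n)).

Definition general_position (xs ys xs' ys' : int -> K) : Prop :=
  [/\ (forall n m : int, n != m -> xs n != xs m /\ xs' n != xs' m),
      (forall n m : int, n != m -> ys n != ys m /\ ys' n != ys' m),
      (forall n m : int, xs n != xs' m /\ ys n != ys' m) &
      (forall n : int, [/\ Xc 2 (xs n) != 0, Xc 2 (xs' n) != 0,
                           Yc 2 (ys n) != 0 & Yc 2 (ys' n) != 0])].

Definition Pmrs (xs xs' : int -> K) (m : nat) (r s : int) (x : K) : K :=
  (\prod_(k < m) (x - xs (r + k%:Z))) / (\prod_(k < m) (x - xs' (s + k%:Z))).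

(* divided difference and mean of f over the two roots x^+, x^- *)
Definition Dop (f : K -> K) (xp xm : K) : K := (f xp - f xm) / (xp - xm).
Definition Mop (f : K -> K) (xp xm : K) : K := (f xp + f xm) / 2%:R.

Definition ratY (ys ys' : int -> K) (m : nat) (r s : int) (y : K) : K :=
  (\prod_(k < m.-1) (y - ys (r + k%:Z))) /
  (\prod_(k < m.+1) (y - ys' (s - 1 + k%:Z))).
End Biquad.

(* Main.v *)
Require Import Defs.
From HB Require Import structures.
From mathcomp Require Import all_boot all_order all_algebra.
From mathcomp Require Import ring zify.
Import Order.TTheory GRing.Theory Num.Theory.
Local Open Scope ring_scope.
Set Implicit Arguments. Unset Strict Implicit.

Section Proof.
Variable K : numClosedFieldType.
Variable c : nat -> nat -> K.

Lemma FbE x y : Fb c x y = Yc c 0 y + Yc c 1 y * x + Yc c 2 y * x ^+ 2.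
Proof. rewrite /Fb /Yc !big_ord_recr !big_ord0 /=. ring. Qed.

Lemma FbX x y : Fb c x y = Xc c 0 x + Xc c 1 x * y + Xc c 2 x * y ^+ 2.
Proof. rewrite /Fb /Xc !big_ord_recr !big_ord0 /=. ring. Qed.

Lemma rootsE y xp xm : xp != xm -> Fb c xp y = 0 -> Fb c xm y = 0 ->
  Yc c 1 y = - Yc c 2 y * (xp + xm) /\ Yc c 0 y = Yc c 2 y * xp * xm.
Proof.
move=> nx; rewrite !FbE => hp hm.
have h1 : Yc c 1 y = - Yc c 2 y * (xp + xm).
  have : (xp - xm) * (Yc c 1 y + Yc c 2 y * (xp + xm)) = 0.
    by rewrite -[RHS](subrr 0) -{1}hp -hm; ring.
  move/eqP; rewrite mulf_eq0 subr_eq0 (negbTE nx) /= addr_eq0 => /eqP ->; ring.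
split=> //.
apply/eqP; rewrite -subr_eq0 -[X in _ == X]hp h1; apply/eqP; ring.
Qed.

Lemma two_neq0 : (2%:R : K) != 0. Proof. by rewrite pnatr_eq0. Qed.
Lemma four_neq0 : (4%:R : K) != 0. Proof. by rewrite pnatr_eq0. Qed.

Lemma DopM (f g : K -> K) xp xm : xp != xm ->
  Dop (fun x => f x * g x) xp xm = Dop f xp xm * Mop g xp xm + Mop f xp xm * Dop g xp xm.
Proof.
move=> nx; rewrite /Dop /Mop; have h : xp - xm != 0 by rewrite subr_eq0.
have := two_neq0 => h2. by field; rewrite ?h ?h2 ?h4.
Qed.

Lemma MopM (f g : K -> K) xp xm : xp != xm ->
  Mop (fun x => f x * g x) xp xm = Mop f xp xm * Mop g xp xm
    + (xp - xm) ^+ 2 / 4%:R * (Dop f xp xm * Dop g xp xm).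
Proof.
move=> nx; rewrite /Dop /Mop; have h : xp - xm != 0 by rewrite subr_eq0.
have := two_neq0 => h2. have := four_neq0 => h4. by field; rewrite ?h ?h2 ?h4.
Qed.


Lemma seqE (xs ys : int -> K) : elliptic_seq c xs ys ->
  (forall n m : int, n != m -> xs n != xs m) -> forall n,
  Yc c 1 (ys n) = - Yc c 2 (ys n) * (xs n + xs (n + 1)) /\
  Yc c 0 (ys n) = Yc c 2 (ys n) * xs n * xs (n + 1).
Proof.
move=> He Hd n; have [h1 _] := He n.
apply: rootsE; first by apply: Hd; lia.
  by rewrite h1 subrr mulr0 mul0r.
by rewrite h1 subrr mulr0.
Qed.

Definition Yp k : {poly K} := \poly_(j < 3) c k j.
Lemma YpE k y : (Yp k).[y] = Yc c k y.
Proof. by rewrite horner_poly. Qed.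
Lemma size_Yp k : (size (Yp k) <= 3)%N.
Proof. exact: size_poly. Qed.

Definition discp : {poly K} := Yp 1 ^+ 2 - 4%:R *: (Yp 0 * Yp 2).
Lemma size_discp : (size discp <= 5)%N.
Proof.
rewrite /discp (leq_trans (size_polyD _ _)) // geq_max; apply/andP; split.
  rewrite expr2 (leq_trans (size_polyMleq _ _)) //.
  by have := size_Yp 1; case: (size _) => [|[|[|[|]]]].
rewrite size_polyN (leq_trans (size_scale_leq _ _)) //.
rewrite (leq_trans (size_polyMleq _ _)) //.
by have := size_Yp 0; have := size_Yp 2; case: (size _) => [|[|[|[|]]]];
   case: (size _) => [|[|[|[|]]]].
Qed.

Lemma discE y xp xm : xp != xm -> Fb c xp y = 0 -> Fb c xm y = 0 ->
  discp.[y] = (Yc c 2 y * (xp - xm)) ^+ 2.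
Proof.
move=> nx hp hm; have [h1 h0] := rootsE nx hp hm.
rewrite /discp hornerD hornerN hornerZ ?horner_exp ?hornerM !YpE h1 h0; ring.
Qed.

Lemma discS (xs ys : int -> K) : elliptic_seq c xs ys ->
  (forall n m : int, n != m -> xs n != xs m) -> forall n,
  discp.[ys n] = (Yc c 2 (ys n) * (xs n - xs (n + 1))) ^+ 2.
Proof.
move=> He Hd n; have [h1 h0] := seqE He Hd n.
rewrite /discp hornerD hornerN hornerZ ?horner_exp ?hornerM !YpE h1 h0; ring.
Qed.

Lemma factor2 (p : {poly K}) a b n : a != b -> (size p <= n.+2)%N ->
  p.[a] = 0 -> p.[b] = 0 ->
  exists q : {poly K}, (size q <= n)%N /\ p = q * (('X - a%:P) * ('X - b%:P)).
Proof.
move=> nab sp pa pb.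
have /factor_theorem [q1 e1] : root p a by apply/eqP.
have : root q1 b.
  move: pb; rewrite e1 hornerM !hornerE => /eqP; rewrite mulf_eq0 subr_eq0 (eq_sym b a).
  by rewrite (negbTE nab) orbF /root => /eqP ->.
move=> /factor_theorem [q2 e2]; exists q2; split; last by rewrite e1 e2 -mulrA (mulrC ('X - b%:P)).
have [->|q2n0] := eqVneq q2 0; first by rewrite size_poly0.
move: sp; rewrite e1 e2 size_Mmonic ?monicXsubC ?mulf_neq0 ?polyXsubC_eq0 //.
rewrite size_Mmonic ?monicXsubC // !size_XsubC; lia.
Qed.

Variables xs ys xs' ys' : int -> K.
Hypothesis He : elliptic_seq c xs ys.
Hypothesis He' : elliptic_seq c xs' ys'.
Hypothesis Hg : general_position c xs ys xs' ys'.

Definition Body (m : nat) (r s : int) (C : K) (D : {poly K}) : Prop :=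
    (size D <= 3)%N /\
        (exists S : seq K, forall y, y \notin S ->
           forall xp xm, xp != xm -> Fb c xp y = 0 -> Fb c xm y = 0 ->
             Dop (Pmrs xs xs' m r s) xp xm
               = C * Yc c 2 y * ratY ys ys' m r s y /\
             Mop (Pmrs xs xs' m r s) xp xm = D.[y] * ratY ys ys' m r s y) /\
        D.[ys (r - 1)] = - (C * Yc c 2 (ys (r - 1)) * (xs r - xs (r - 1))) / 2%:R /\
        D.[ys (r + m%:Z - 1)] = C * Yc c 2 (ys (r + m%:Z - 1))
                                  * (xs (r + m%:Z) - xs (r + m%:Z - 1)) / 2%:R /\
        D.[ys' (s - 1)] = C * Yc c 2 (ys' (s - 1)) * (xs' s - xs' (s - 1)) / 2%:R
        /\ D.[ys' (s + m%:Z - 1)] = - (C * Yc c 2 (ys' (s + m%:Z - 1))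
                                  * (xs' (s + m%:Z) - xs' (s + m%:Z - 1))) / 2%:R.

Lemma xsD n m : n != m -> xs n != xs m. Proof. by case: Hg => h _ _ _ /h []. Qed.
Lemma xsD' n m : n != m -> xs' n != xs' m. Proof. by case: Hg => h _ _ _ /h []. Qed.
Lemma ysD n m : n != m -> ys n != ys m. Proof. by case: Hg => _ h _ _ /h []. Qed.
Lemma ysD' n m : n != m -> ys' n != ys' m. Proof. by case: Hg => _ h _ _ /h []. Qed.
Lemma xxD n m : xs n != xs' m. Proof. by case: Hg => _ _ h _; case: (h n m). Qed.
Lemma yyD n m : ys n != ys' m. Proof. by case: Hg => _ _ h _; case: (h n m). Qed.
Lemma X2nz' n : Xc c 2 (xs' n) != 0. Proof. by case: Hg => _ _ _ h; case: (h n). Qed.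

Lemma Pm1 r s x : Pmrs xs xs' 1 r s x = (x - xs r) / (x - xs' s).
Proof. by rewrite /Pmrs !big_ord1 /= !addr0. Qed.

Lemma ratY1 r s y : ratY ys ys' 1 r s y = ((y - ys' (s - 1)) * (y - ys' s))^-1.
Proof. by rewrite /ratY big_ord0 big_ord_recr big_ord1 /= addr0 subrK mul1r. Qed.

Definition D1p (a b : K) : {poly K} :=
  (Xc c 2 b)^-1 *: (Yp 0 + ((a + b) / 2%:R) *: Yp 1 + (a * b) *: Yp 2).

Lemma D1pE a b y : (D1p a b).[y] =
  (Yc c 0 y + (a + b) * Yc c 1 y / 2%:R + a * b * Yc c 2 y) / Xc c 2 b.
Proof. rewrite /D1p hornerZ !hornerD !hornerZ !YpE; ring. Qed.

Lemma size3D (p q : {poly K}) : (size p <= 3)%N -> (size q <= 3)%N -> (size (p + q)%R <= 3)%N.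
Proof. by move=> hp hq; rewrite (leq_trans (size_polyD _ _)) // geq_max hp hq. Qed.
Lemma size3Z (a : K) (p : {poly K}) : (size p <= 3)%N -> (size (a *: p)%R <= 3)%N.
Proof. by move=> hp; rewrite (leq_trans (size_scale_leq _ _)). Qed.

Lemma base r s : exists C D, Body 1 r s C D /\
  C = (xs r - xs' s) / Xc c 2 (xs' s) /\
  forall y, D.[y] = (Yc c 0 y + (xs r + xs' s) * Yc c 1 y / 2%:R
                              + xs r * xs' s * Yc c 2 y) / Xc c 2 (xs' s).
Proof.
set a := xs r; set b := xs' s.
exists ((a - b) / Xc c 2 b), (D1p a b).
split; last by split=> // y; rewrite D1pE.
have h2 := two_neq0; have hX := X2nz' s.
split; first by rewrite size3Z // !size3D ?size3Z ?size_Yp.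
split.
  exists [:: ys' (s - 1); ys' s] => y; rewrite !inE negb_or => /andP [n1 n2].
  move=> xp xm nx hp hm; have [h1 h0] := rootsE nx hp hm.
  have hFb : Fb c b y = Xc c 2 b * (y - ys' (s - 1)) * (y - ys' s).
    by have [_ ->] := He' s.
  have hFb2 : Fb c b y = Yc c 2 y * (b - xp) * (b - xm).
    by rewrite FbE h1 h0; ring.
  have hnz : Fb c b y != 0 by rewrite hFb !mulf_neq0 // subr_eq0.
  move: hnz; rewrite hFb2 !mulf_eq0 !negb_or => /andP [/andP [hY2 hb1] hb2].
  have hp' : xp - b != 0 by rewrite -oppr_eq0 opprB.
  have hm' : xm - b != 0 by rewrite -oppr_eq0 opprB.
  have hy1 : y - ys' (s - 1) != 0 by rewrite subr_eq0.
  have hy2 : y - ys' s != 0 by rewrite subr_eq0.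
  have hxx : xp - xm != 0 by rewrite subr_eq0.
  have eY2 : Yc c 2 y = Xc c 2 b * (y - ys' (s - 1)) * (y - ys' s) / ((b - xp) * (b - xm)).
    by rewrite -hFb hFb2; field; rewrite hb1 hb2.
  rewrite /Dop /Mop !Pm1 ratY1 -/a -/b.
  split.
    rewrite eY2; field. by rewrite ?hb1 ?hb2 ?hp' ?hm' ?hxx hy1 hy2 hX.
  rewrite D1pE h1 h0 eY2; field. by rewrite ?hb1 ?hb2 ?hp' ?hm' ?hxx hy1 hy2 hX ?h2.
have hS := seqE He xsD; have hS' := seqE He' xsD'.
have e1 : r + 1%:Z - 1 = r by lia.
have e2 : s + 1%:Z - 1 = s by lia.
have e3 : r - 1 + 1 = r by lia.
have e4 : s - 1 + 1 = s by lia.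
have e5 : r + 1%:Z = r + 1 by [].
have e6 : s + 1%:Z = s + 1 by [].
rewrite !D1pE e1 e2 e5 e6.
have [a1 a0] := hS (r - 1); have [b1 b0] := hS r.
have [c1 c0] := hS' (s - 1); have [d1 d0] := hS' s.
rewrite e3 in a1 a0; rewrite e4 in c1 c0.
rewrite a1 a0 b1 b0 c1 c0 d1 d0 -/a -/b.
split; first by field; rewrite hX ?h2.
split; first by field; rewrite hX ?h2.
split; first by field; rewrite hX ?h2.
by field; rewrite hX ?h2.
Qed.

Lemma DopM' (h f g : K -> K) xp xm : xp != xm ->
  h xp = f xp * g xp -> h xm = f xm * g xm ->
  Dop h xp xm = Dop f xp xm * Mop g xp xm + Mop f xp xm * Dop g xp xm.
Proof. by move=> nx e1 e2; rewrite -(DopM f g nx) /Dop e1 e2. Qed.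

Lemma MopM' (h f g : K -> K) xp xm : xp != xm ->
  h xp = f xp * g xp -> h xm = f xm * g xm ->
  Mop h xp xm = Mop f xp xm * Mop g xp xm
    + (xp - xm) ^+ 2 / 4%:R * (Dop f xp xm * Dop g xp xm).
Proof. by move=> nx e1 e2; rewrite -(MopM f g nx) /Mop e1 e2. Qed.

Lemma Pm_step m r s x : Pmrs xs xs' m.+1 r s x =
  Pmrs xs xs' m r s x * Pmrs xs xs' 1 (r + m%:Z) (s + m%:Z) x.
Proof.
rewrite /Pmrs big_ord_recr [in X in _ / X]big_ord_recr /= !big_ord1 /= !addr0.
by rewrite invfM mulrACA.
Qed.

Lemma ratY_step n r s y : y != ys' (s + n.+1%:Z - 1) ->
  ratY ys ys' n.+2 r s y = ratY ys ys' n.+1 r s y * ratY ys ys' 1 (r + n.+1%:Z) (s + n.+1%:Z) y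
     * (y - ys (r + n.+1%:Z - 1)) * (y - ys' (s + n.+1%:Z - 1)).
Proof.
move=> hy; rewrite ratY1 /ratY /=.
rewrite [\prod_(k < n.+1) _]big_ord_recr [\prod_(k < n.+3) _]big_ord_recr /=.
have i1 : r + n%:Z = r + n.+1%:Z - 1 by lia.
have i2 : s - 1 + n.+2%:Z = s + n.+1%:Z by lia.
rewrite i1 i2.
have hw : y - ys' (s + n.+1%:Z - 1) != 0 by rewrite subr_eq0.
rewrite !invfM.
set iD := (\prod_(i < n.+2) _)^-1; set iB := (y - ys' (s + n.+1%:Z))^-1.
by field.
Qed.

Lemma step n r s C D C1 D1 : Body n.+1 r s C D ->
  Body 1 (r + n.+1%:Z) (s + n.+1%:Z) C1 D1 -> exists C' D', Body n.+2 r s C' D'.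
Proof.
move=> [sD [[S hS] [d1 [d2 [d3 d4]]]]] [sD1 [[S1 hS1] [f1 [f2 [f3 f4]]]]].
set a := ys (r + n.+1%:Z - 1); set b := ys' (s + n.+1%:Z - 1).
have nab : a != b := yyD _ _.
have h2 := two_neq0; have h4 := four_neq0.
set E := C *: D1 + C1 *: D.
have sE : (size E <= 3)%N by rewrite size3D ?size3Z.
have Ea : E.[a] = 0.
  rewrite /E hornerD !hornerZ d2. rewrite /a in f1 *. rewrite f1; ring.
have Eb : E.[b] = 0.
  rewrite /E hornerD !hornerZ d4. rewrite /b in f3 *. rewrite f3; ring.
have [q [sq eE]] := factor2 (n := 1) nab sE Ea Eb.
set C' := q`_0.
have hEt t : E.[t] = C' * ((t - a) * (t - b)).
  by rewrite eE (size1_polyC sq) hornerM !hornerE.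
set G := D * D1 + (C * C1 / 4%:R) *: discp.
have sG : (size G <= 5)%N.
  rewrite (leq_trans (size_polyD _ _)) // geq_max; apply/andP; split.
    rewrite (leq_trans (size_polyMleq _ _)) //.
    by move: sD sD1; case: (size D) => [|[|[|[|]]]]; case: (size D1) => [|[|[|[|]]]].
  by rewrite (leq_trans (size_scale_leq _ _)) // size_discp.
have Ga : G.[a] = 0.
  have := discS He xsD (r + n.+1%:Z - 1); rewrite -/a => hd.
  have i : r + n.+1%:Z - 1 + 1 = r + n.+1%:Z by lia.
  rewrite i in hd.
  rewrite /G hornerD hornerM hornerZ d2 hd. rewrite /a in f1 *. by rewrite f1; field; rewrite ?h2 ?h4.
have Gb : G.[b] = 0.
  have := discS He' xsD' (s + n.+1%:Z - 1); rewrite -/b => hd.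
  have i : s + n.+1%:Z - 1 + 1 = s + n.+1%:Z by lia.
  rewrite i in hd.
  rewrite /G hornerD hornerM hornerZ d4 hd. rewrite /b in f3 *. by rewrite f3; field; rewrite ?h2 ?h4.
have [D' [sD' eG]] := factor2 (n := 3) nab sG Ga Gb.
have hGt t : G.[t] = D'.[t] * ((t - a) * (t - b)).
  by rewrite eG hornerM !hornerE.
exists C', D'.
split => //.
split.
  exists (b :: S ++ S1) => y; rewrite inE mem_cat !negb_or => /and3P [yb yS yS1].
  move=> xp xm nx hp hm.
  have [hD hM] := hS y yS xp xm nx hp hm.
  have [hD1 hM1] := hS1 y yS1 xp xm nx hp hm.
  rewrite (ratY_step r yb) -/a -/b.
  have := hEt y; rewrite /E hornerD !hornerZ => hEy.
  have := hGt y; rewrite /G hornerD hornerM hornerZ (discE nx hp hm) => hGy.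
  split.
    rewrite (DopM' nx (Pm_step _ _ _ _) (Pm_step _ _ _ _)) hD hM hD1 hM1.
    transitivity (Yc c 2 y * ratY ys ys' n.+1 r s y * ratY ys ys' 1 (r + n.+1%:Z) (s + n.+1%:Z) y
       * (C * D1.[y] + C1 * D.[y])); first by ring.
    rewrite hEy; ring.
  rewrite (MopM' nx (Pm_step _ _ _ _) (Pm_step _ _ _ _)) hD hM hD1 hM1.
  transitivity (ratY ys ys' n.+1 r s y * ratY ys ys' 1 (r + n.+1%:Z) (s + n.+1%:Z) y
       * (D.[y] * D1.[y] + C * C1 / 4%:R * (Yc c 2 y * (xp - xm)) ^+ 2)); first by ring.
  rewrite hGy; ring.
have endp t k : (t - a) * (t - b) != 0 -> G.[t] = k * E.[t] -> D'.[t] = k * C'.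
  move=> hW hG; apply: (mulIf hW); rewrite -hGt hG hEt; ring.
have Wy u : u != r + n.+1%:Z - 1 -> (ys u - a) * (ys u - b) != 0.
  move=> hu; rewrite mulf_neq0 // subr_eq0 ?ysD ?yyD //.
have Wy' u : u != s + n.+1%:Z - 1 -> (ys' u - a) * (ys' u - b) != 0.
  move=> hu; rewrite mulf_neq0 // subr_eq0 ?ysD' // eq_sym yyD //.
split.
  have := discS He xsD (r - 1); have -> : r - 1 + 1 = r by lia.
  move=> hd.
  rewrite (endp _ (- (Yc c 2 (ys (r - 1)) * (xs r - xs (r - 1))) / 2%:R)).
  - by field; rewrite ?h2.
  - by apply: Wy; lia.
  rewrite /G /E !hornerD hornerM !hornerZ hd d1.
  by field; rewrite ?h2 ?h4.
have i1 : r + n.+2%:Z - 1 = r + n.+1%:Z by lia.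
have i2 : r + n.+2%:Z = r + n.+1%:Z + 1 by lia.
have i3 : s + n.+2%:Z - 1 = s + n.+1%:Z by lia.
have i4 : s + n.+2%:Z = s + n.+1%:Z + 1 by lia.
have i5 : r + n.+1%:Z + 1%:Z - 1 = r + n.+1%:Z by lia.
have i6 : s + n.+1%:Z + 1%:Z - 1 = s + n.+1%:Z by lia.
have i7 : r + n.+1%:Z + 1%:Z = r + n.+1%:Z + 1 by [].
have i8 : s + n.+1%:Z + 1%:Z = s + n.+1%:Z + 1 by [].
rewrite i5 i7 in f2; rewrite i6 i8 in f4.
rewrite i1 i2 i3 i4.
split.
  have hd := discS He xsD (r + n.+1%:Z).
  rewrite (endp _ (Yc c 2 (ys (r + n.+1%:Z)) * (xs (r + n.+1%:Z + 1) - xs (r + n.+1%:Z)) / 2%:R)).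
  - by field; rewrite ?h2.
  - by apply: Wy; lia.
  rewrite /G /E !hornerD hornerM !hornerZ hd f2.
  by field; rewrite ?h2 ?h4.
split.
  have := discS He' xsD' (s - 1); have -> : s - 1 + 1 = s by lia.
  move=> hd.
  rewrite (endp _ ((Yc c 2 (ys' (s - 1)) * (xs' s - xs' (s - 1))) / 2%:R)).
  - by field; rewrite ?h2.
  - by apply: Wy'; lia.
  rewrite /G /E !hornerD hornerM !hornerZ hd d3.
  by field; rewrite ?h2 ?h4.
have hd := discS He' xsD' (s + n.+1%:Z).
rewrite (endp _ (- (Yc c 2 (ys' (s + n.+1%:Z)) * (xs' (s + n.+1%:Z + 1) - xs' (s + n.+1%:Z))) / 2%:R)).
- by field; rewrite ?h2.
- by apply: Wy'; lia.
rewrite /G /E !hornerD hornerM !hornerZ hd f4.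
by field; rewrite ?h2 ?h4.
Qed.

Lemma allm n r s : exists C D, Body n.+1 r s C D.
Proof.
elim: n r s => [|n IH] r s.
  by have [C [D [h _]]] := base r s; exists C, D.
have [C [D h]] := IH r s.
have [C1 [D1 [h1 _]]] := base (r + n.+1%:Z) (s + n.+1%:Z).
exact: step h h1.
Qed.


End Proof.

Theorem mainTheorem8 (K : numClosedFieldType) (c : nat -> nat -> K)
    (xs ys xs' ys' : int -> K) :
  elliptic_seq c xs ys -> elliptic_seq c xs' ys' ->
  general_position c xs ys xs' ys' ->
  forall (m : nat) (r s : int), (1 <= m)%N ->
  exists (C : K) (D : {poly K}),
    (size D <= 3)%N /\
        (* identities of rational functions in y: they hold for all y outside
           a finite exceptional set, with x^+ <> x^- the two roots of F(.,y) *)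
        (exists S : seq K, forall y, y \notin S ->
           forall xp xm, xp != xm -> Fb c xp y = 0 -> Fb c xm y = 0 ->
             Dop (Pmrs xs xs' m r s) xp xm
               = C * Yc c 2 y * ratY ys ys' m r s y /\
             Mop (Pmrs xs xs' m r s) xp xm = D.[y] * ratY ys ys' m r s y) /\
        (m = 1%N ->
           C = (xs r - xs' s) / Xc c 2 (xs' s) /\
           forall y, D.[y] = (Yc c 0 y + (xs r + xs' s) * Yc c 1 y / 2%:R
                              + xs r * xs' s * Yc c 2 y) / Xc c 2 (xs' s)) /\
        D.[ys (r - 1)] = - (C * Yc c 2 (ys (r - 1)) * (xs r - xs (r - 1))) / 2%:R /\
        D.[ys (r + m%:Z - 1)] = C * Yc c 2 (ys (r + m%:Z - 1))
                                  * (xs (r + m%:Z) - xs (r + m%:Z - 1)) / 2%:R /\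
        D.[ys' (s - 1)] = C * Yc c 2 (ys' (s - 1)) * (xs' s - xs' (s - 1)) / 2%:R
        /\ D.[ys' (s + m%:Z - 1)] = - (C * Yc c 2 (ys' (s + m%:Z - 1))
                                  * (xs' (s + m%:Z) - xs' (s + m%:Z - 1))) / 2%:R.
Proof.
move=> He He' Hg m r s hm.
case: m hm => [//|[|n]] _.
  have [C [D [[sD [hS [d1 [d2 [d3 d4]]]]] [eC eD]]]] := base He He' Hg r s.
  by exists C, D; do !split.
have [C [D [sD [hS [d1 [d2 [d3 d4]]]]]]] := allm He He' Hg (n.+1) r s.
by exists C, D; do !split.
Qed.
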